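(* Fix integers $k\ge 3$ and $r\ge 1$. For $n\ge 0$ let $d_n$ be the number of words on $[n]^r$ that avoid both $1234$ and $1k(k-1)\cdots 2$. Then the sequence $(d_n)_{n\ge0}$ satisfies a linear recurrence with constant coefficients; equivalently, $\sum_{n\ge 0} d_n x^n$ is a rational function of $x$.
   Context: A word on $[n]^r$ is a word in which each letter $1,2,\dots,n$ appears exactly $r$ times and no other letter appears (for $r=1$ these are the permutations of $[n]$). A word $w_1\cdots w_m$ contains a pattern $p_1\cdots p_k$ if there are indices $i_1<\dots<i_k$ such that for all $r,s$: $w_{i_r}<w_{i_s}\iff p_r<p_s$ and $w_{i_r}>w_{i_s}\iff p_r>p_s$; otherwise it avoids it. The pattern $1k(k-1)\cdots 2$ is $1$ followed by $k,k-1,\dots,2$. *)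

(* Defs.v *)
From mathcomp Require Import all_boot all_order all_algebra.
Set Implicit Arguments. Unset Strict Implicit. Unset Printing Implicit Defensive.
Import GRing.Theory.

Definition base_word (n r : nat) : seq nat :=
  flatten [seq nseq r i | i <- iota 1 n].

Definition is_word (n r : nat) (w : seq nat) : bool :=
  perm_eq (base_word n r) w.

Definition words (n r : nat) : seq (seq nat) := permutations (base_word n r).

(* w contains p: some subsequence of w (selected by a mask, i.e. by indices
   i_1 < ... < i_k) is order-isomorphic to p. The comparison is checked for all
   ordered pairs (a,b), which covers both the "<" and ">" conditions. *)
Definition contains (w p : seq nat) : bool :=
  [exists m : (size w).-tuple bool,
     let s := mask m w in
     (size s == size p) &&
     all (fun a => all (fun b => (nth 0 s a < nth 0 s b) == (nth 0 p a < nth 0 p b))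
                       (iota 0 (size p)))
         (iota 0 (size p))]%N.

Definition avoids (w p : seq nat) : bool := ~~ contains w p.

Definition pat1234 : seq nat := [:: 1; 2; 3; 4]%N.

Definition pat1k (k : nat) : seq nat := 1%N :: rev (iota 2 k.-1).

Definition d (k r n : nat) : nat :=
  count (fun w => avoids w pat1234 && avoids w (pat1k k)) (words n r).

Definition linear_recurrent (u : nat -> nat) : Prop :=
  exists (m N : nat) (c : seq rat), size c = m /\
    forall n, (N <= n)%N ->
      ((u (n + m)%N)%:R = \sum_(i < m) c`_i * (u (n + i)%N)%:R :> rat)%R.

(* Main.v *)
Require Import Defs.
From mathcomp Require Import all_boot all_order all_algebra zify.
Set Implicit Arguments. Unset Strict Implicit. Unset Printing Implicit Defensive.
Import GRing.Theory.

Lemma horner_mx_expand (M : nat) (A : 'M[rat]_M.+1) (p : {poly rat}) :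
  horner_mx A p = (\sum_(i < size p) p`_i *: A ^+ i)%R.
Proof.
rewrite -{1}(coefK p) poly_def linear_sum /=.
apply: eq_bigr => i _; rewrite linearZ /= rmorphXn /= horner_mx_X //.
Qed.

Lemma linrec_abs (S : seq (seq nat)) (F : nat -> seq nat -> nat)
  (T : seq nat -> seq nat -> nat) (u : nat -> nat) N :
  (forall n, (N <= n)%N -> u n = \sum_(s <- S) F n s) ->
  (forall n, (N <= n)%N -> forall t, t \in S ->
      F n.+1 t = \sum_(s <- S) F n s * T s t) ->
  linear_recurrent u.
Proof.
move=> Hu HF.
case HS: (size S) => [|M].
  exists 0, N, [::]; split => // n Hn.
  rewrite big_ord0 addn0 (Hu n Hn).
  by move/size0nil: HS => ->; rewrite big_nil.
have sumS : forall G : seq nat -> nat,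
    \sum_(s <- S) G s = \sum_(i < M.+1) G (nth [::] S i).
  by move=> G; rewrite (big_nth [::]) HS big_mkord.
pose A : 'M[rat]_M.+1 := (\matrix_(i, j) (T (nth [::] S j) (nth [::] S i))%:R)%R.
pose v := fun n => (\col_(i < M.+1) ((F n (nth [::] S i))%:R : rat))%R.
have Hv : forall n, (N <= n)%N -> v n.+1 = (A *m v n)%R.
  move=> n Hn; apply/matrixP => i j; rewrite !mxE.
  rewrite HF //; last by rewrite mem_nth // HS.
  rewrite sumS natr_sum; apply: eq_bigr => l _.
  by rewrite !mxE natrM mulrC.
have Hpow : forall t, v (N + t)%N = (A ^+ t *m v N)%R.
  elim=> [|t IH]; first by rewrite addn0 expr0 mul1mx.
  by rewrite addnS Hv ?leq_addr // IH exprS mulmxA mulmxE.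
have Hu' : forall n, (N <= n)%N -> ((u n)%:R = \sum_(i < M.+1) v n i 0 :> rat)%R.
  move=> n Hn; rewrite Hu // sumS natr_sum; apply: eq_bigr => i _.
  by rewrite mxE.
pose phi := fun X : 'M[rat]_M.+1 => (\sum_(j < M.+1) (X *m v N) j 0)%R.
have phiE : forall t, ((u (N + t)%N)%:R = phi (A ^+ t))%R.
  by move=> t; rewrite Hu' ?leq_addr // Hpow.
pose p := char_poly A.
have Hsz : size p = M.+2 by rewrite size_char_poly.
have Hlead : (p`_M.+1 = 1)%R.
  by have := char_poly_monic A; move/monicP; rewrite lead_coefE Hsz.
exists M.+1, N, (mkseq (fun i => - p`_i)%R M.+1); split; first by rewrite size_mkseq.
move=> n Hn; have -> : n = (N + (n - N))%N by rewrite subnKC.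
set t := (n - N)%N.
have CH := Cayley_Hamilton A.
rewrite horner_mx_expand -/p Hsz in CH.
have H0 : (\sum_(i < M.+2) p`_i * (u (N + t + i)%N)%:R = 0 :> rat)%R.
  have -> : (\sum_(i < M.+2) p`_i * (u (N + t + i)%N)%:R =
             phi (A ^+ t * \sum_(i < M.+2) p`_i *: A ^+ i))%R.
    rewrite mulr_sumr /phi mulmx_suml.
    under [RHS]eq_bigr do rewrite summxE.
    rewrite exchange_big /=.
    apply: eq_bigr => i _.
    rewrite -addnA phiE /phi mulr_sumr; apply: eq_bigr => j _.
    by rewrite -scalerAr -exprD -scalemxAl [in RHS]mxE.
  rewrite CH mulr0 /phi; apply: big1 => j _.
  by rewrite mul0mx mxE.
rewrite big_ord_recr /= Hlead mul1r in H0.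
move/eqP: H0; rewrite addrC addr_eq0 => /eqP ->.
rewrite -sumrN; apply: eq_bigr => i _.
by rewrite nth_mkseq // mulNr.
Qed.

Definition Rz (x y : nat * nat) := (x.1 < y.1) == (x.2 < y.2).
Definition isoZ (s p : seq nat) := allrel Rz (zip s p) (zip s p).

Lemma isoB_isoZ s p : size s = size p ->
  all (fun a => all (fun b => (nth 0 s a < nth 0 s b) == (nth 0 p a < nth 0 p b))
                    (iota 0 (size p))) (iota 0 (size p)) = isoZ s p.
Proof.
move=> Hs; have Hz : size (zip s p) = size p by rewrite size_zip Hs minnn.
apply/idP/allrelP.
- move/allP => H x y /(nthP (0,0)) [i hi <-] /(nthP (0,0)) [j hj <-].
  rewrite Hz in hi hj.
  rewrite !nth_zip //.
  have := H i; rewrite mem_iota /= hi => /(_ isT) /allP /(_ j); rewrite mem_iota hj.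
  by move/(_ isT).
- move=> H; apply/allP => a; rewrite mem_iota => /andP [_ ha].
  apply/allP => b; rewrite mem_iota => /andP [_ hb].
  have ha' : a < size (zip s p) by rewrite Hz.
  have hb' : b < size (zip s p) by rewrite Hz.
  by have := H _ _ (mem_nth (0,0) ha') (mem_nth (0,0) hb'); rewrite !nth_zip.
Qed.

Lemma containsP w p :
  reflect (exists s, [/\ subseq s w, size s = size p & isoZ s p]) (contains w p).
Proof.
apply: (iffP existsP).
- case=> m /andP [/eqP Hsz Hall].
  exists (mask m w); split => //; first exact: mask_subseq.
  by rewrite -isoB_isoZ.
- case=> s [/subseqP [m Hm ->] Hsz Hiso].
  have Hm' : size m == size w by apply/eqP.
  exists (Tuple Hm'); rewrite /= Hsz eqxx /= isoB_isoZ //.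
Qed.

Lemma contains_sub w1 w2 p : subseq w1 w2 -> contains w1 p -> contains w2 p.
Proof.
move=> H12 /containsP [s [H1 H2 H3]]; apply/containsP; exists s; split => //.
exact: subseq_trans H12.
Qed.

Lemma zip_mapl (g : nat -> nat) s p :
  zip (map g s) p = map (fun z : nat * nat => (g z.1, z.2)) (zip s p).
Proof. by elim: s p => [|x s IH] [|y p] //=; rewrite IH. Qed.

Lemma zip_mapr (g : nat -> nat) s p :
  zip s (map g p) = map (fun z : nat * nat => (z.1, g z.2)) (zip s p).
Proof. by elim: s p => [|x s IH] [|y p] //=; rewrite IH. Qed.

Lemma mem_zip1 (z : nat * nat) s p : z \in zip s p -> z.1 \in s /\ z.2 \in p.
Proof.
elim: s p => [|x s IH] [|y p] //=.
rewrite in_cons => /orP [/eqP -> | /IH [h1 h2]] /=; first by rewrite !mem_head.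
by rewrite !in_cons h1 h2 !orbT.
Qed.

Lemma isoZ_mapl g s p : {in s &, forall x y, (g x < g y) = (x < y)} ->
  isoZ (map g s) p = isoZ s p.
Proof.
move=> Hg; rewrite /isoZ zip_mapl allrel_mapl allrel_mapr.
apply: (@eq_in_allrel _ _ (mem (zip s p)) (mem (zip s p))); last 2 first.
- by apply/allP.
- by apply/allP.
move=> x y hx hy; rewrite /Rz /= Hg //.
- by case: (mem_zip1 hx).
- by case: (mem_zip1 hy).
Qed.

Lemma isoZ_mapr g s p : {in p &, forall x y, (g x < g y) = (x < y)} ->
  isoZ s (map g p) = isoZ s p.
Proof.
move=> Hg; rewrite /isoZ zip_mapr allrel_mapl allrel_mapr.
apply: (@eq_in_allrel _ _ (mem (zip s p)) (mem (zip s p))); last 2 first.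
- by apply/allP.
- by apply/allP.
move=> x y hx hy; rewrite /Rz /= Hg //.
- by case: (mem_zip1 hx).
- by case: (mem_zip1 hy).
Qed.

Lemma contains_mapl g w p : {in w &, forall x y, (g x < g y) = (x < y)} ->
  contains (map g w) p = contains w p.
Proof.
move=> Hg; apply/containsP/containsP.
- case=> s [/subseqP [m Hm ->] Hsz Hiso].
  rewrite -map_mask size_map in Hsz Hiso *.
  exists (mask m w); split => //; first exact: mask_subseq.
  rewrite isoZ_mapl // in Hiso.
  by move=> x y hx hy; apply: Hg; apply: (mem_mask (m := m)).
- case=> s [Hsub Hsz Hiso]; exists (map g s); split.
  + exact: map_subseq.
  + by rewrite size_map.
  + rewrite isoZ_mapl // => x y hx hy; apply: Hg; exact: (mem_subseq Hsub).
Qed.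

Lemma contains_mapr g w p : {in p &, forall x y, (g x < g y) = (x < y)} ->
  contains w (map g p) = contains w p.
Proof.
move=> Hg; apply/containsP/containsP.
- case=> s [Hsub Hsz Hiso]; exists s; split => //.
  + by rewrite Hsz size_map.
  + by rewrite isoZ_mapr in Hiso.
- case=> s [Hsub Hsz Hiso]; exists s; split => //.
  + by rewrite size_map.
  + by rewrite isoZ_mapr.
Qed.

Lemma isoZ_cons y c s q : isoZ (y :: s) (c :: q) =
  [&& all (Rz (y, c)) (zip s q), all (fun z => Rz z (y, c)) (zip s q) & isoZ s q].
Proof. by rewrite /isoZ /= allrel_cons2 /Rz /= !ltnn eqxx. Qed.

Lemma contains_nil w : contains w [::].
Proof. by apply/containsP; exists [::]; split => //; apply: sub0seq. Qed.

Fixpoint ins (m : bitseq) (v : seq nat) : seq nat :=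
  match m with
  | [::] => v
  | b :: m' => if b then 1 :: ins m' v
               else match v with [::] => ins m' [::] | y :: v' => y :: ins m' v' end
  end.

Lemma ins_nseq c m v : ins (nseq c false ++ m) v = take c v ++ ins m (drop c v).
Proof.
elim: c v => [|c IH] [|y v] /=; rewrite ?take0 ?drop0 //; by rewrite IH.
Qed.

Lemma filter_ins m v : 1 \notin v -> filter (predC1 1) (ins m v) = v.
Proof.
elim: m v => [|b m IH] v Hv /=.
  by apply/all_filterP/allP => x hx /=; apply/eqP => E; rewrite -E hx in Hv.
case: b => /=; first exact: IH.
case: v Hv => [|y v] Hv /=; first exact: IH.
rewrite in_cons negb_or in Hv; case/andP: Hv => Hy Hv.
by rewrite eq_sym in Hy; rewrite Hy IH.
Qed.

Lemma perm_ins m v : perm_eq (ins m v) (nseq (count id m) 1 ++ v).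
Proof.
elim: m v => [|b m IH] v /=; first exact: perm_refl.
case: b => /=; first by rewrite perm_cons.
case: v => [|y v]; first exact: IH.
rewrite add0n perm_sym.
have -> : nseq (count id m) 1 ++ y :: v = nseq (count id m) 1 ++ [:: y] ++ v by [].
by rewrite perm_catCA /= perm_cons perm_sym.
Qed.

Lemma mem_ins m v x : x \in ins m v -> x = 1 \/ x \in v.
Proof.
rewrite (perm_mem (perm_ins m v)) mem_cat => /orP [|]; last by right.
by move/nseqP => [-> _]; left.
Qed.

Lemma map_ins (g : nat -> nat) m v : g 1 = 1 -> map g (ins m v) = ins m (map g v).
Proof.
move=> H1; elim: m v => [|b m IH] v //=.
case: b => /=; first by rewrite H1 IH.
by case: v => [|y v] /=; rewrite IH.
Qed.

Lemma ins_inv w : ins (map (pred1 1) w) (filter (predC1 1) w) = w.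
Proof.
elim: w => [|x w IH] //=.
by case: eqP => [-> | _] /=; rewrite IH.
Qed.

Lemma map_pred1_ins m v : 1 \notin v -> count negb m = size v ->
  map (pred1 1) (ins m v) = m.
Proof.
elim: m v => [|b m IH] v Hv /=; first by case: v {Hv}.
case: b => /= [Hc|]; first by rewrite IH.
case: v Hv => [|y v] //= Hv [Hc].
rewrite in_cons negb_or in Hv; case/andP: Hv => Hy Hv.
by rewrite IH // eq_sym (negbTE Hy).
Qed.

Lemma split_index m : true \in m ->
  m = nseq (index true m) false ++ true :: drop (index true m).+1 m.
Proof.
elim: m => [|b m IH] //=; case: b => /=; first by rewrite drop0.
by rewrite in_cons /= => H; rewrite {1}(IH H).
Qed.

Lemma subseq_skip (x : nat) (s X t : seq nat) : x \notin X ->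
  subseq (x :: s) (X ++ t) = subseq (x :: s) t.
Proof.
elim: X => [|y X IH] //=; rewrite in_cons negb_or => /andP [Hxy HX].
by rewrite (negbTE Hxy) IH.
Qed.

Lemma decomp a q m v : all (fun e => a < e) q -> all (fun x => 1 < x) v -> true \in m ->
  contains (ins m v) (a :: q) = contains v (a :: q) || contains (drop (index true m) v) q.
Proof.
move=> Hq Hv Hm.
have H1v : 1 \notin v by apply/negP => /(allP Hv); rewrite ltnn.
set j := index true m.
have Hw : ins m v = take j v ++ 1 :: ins (drop j.+1 m) (drop j v).
  by rewrite {1}(split_index Hm) ins_nseq.
have Hvw : subseq v (ins m v).
  by rewrite -{1}(filter_ins m H1v) filter_subseq.
apply/idP/orP.
- move/containsP => [s [Hsub Hsz Hiso]].
  case H1s: (1 \in s); last first.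
    left; apply/containsP; exists s; split => //.
    rewrite -(filter_ins m H1v) subseq_filter Hsub andbT.
    by apply/allP => x hx /=; apply/eqP => E; rewrite -E hx in H1s.
  right; case: s Hsub Hsz Hiso H1s => [|y s] // Hsub [Hsz] Hiso H1s.
  rewrite isoZ_cons in Hiso; case/and3P: Hiso => Hi1 Hi2 Hi3.
  have Hy1 : 1 <= y.
    case: (mem_ins (mem_subseq Hsub (mem_head y s))) => [->//|/(allP Hv)].
    by move/ltnW.
  have N1s : 1 \notin s.
    apply/negP => H1.
    have [i hi Ei] := (nthP 0 H1).
    have hiz : i < size (zip s q) by rewrite size_zip Hsz minnn -Hsz.
    have := allP Hi1 _ (mem_nth (0,0) hiz).
    rewrite nth_zip // Ei /Rz /=.
    have -> : a < nth 0 q i by apply: (allP Hq); apply: mem_nth; rewrite -Hsz.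
    by rewrite ltnNge Hy1.
  have Ey : y = 1 by move: H1s; rewrite in_cons (negbTE N1s) orbF => /eqP.
  subst y.
  apply/containsP; exists s; split => //.
  have HX : 1 \notin take j v by apply/negP => /mem_take; rewrite (negbTE H1v).
  rewrite Hw subseq_skip //= ?eqxx in Hsub.
  rewrite -(@filter_ins (drop j.+1 m) (drop j v)); last first.
    by apply/negP => /mem_drop; rewrite (negbTE H1v).
  rewrite subseq_filter Hsub andbT.
  by apply/allP => x hx /=; apply/eqP => E; rewrite -E hx in N1s.
- case=> [|]; first exact: contains_sub.
  move/containsP => [s [Hsub Hsz Hiso]].
  apply/containsP; exists (1 :: s); split; last first.
    rewrite isoZ_cons Hiso andbT; apply/andP; split; apply/allP => z hz;
      case: (mem_zip1 hz) => hz1 hz2; rewrite /Rz /=.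
    + have -> : 1 < z.1 by apply: (allP Hv); apply: (mem_drop (mem_subseq Hsub hz1)).
      by rewrite (allP Hq _ hz2).
    + have -> : z.1 < 1 = false.
        by rewrite ltnNge ltnW //; apply: (allP Hv); apply: (mem_drop (mem_subseq Hsub hz1)).
      by rewrite ltnNge ltnW // (allP Hq _ hz2).
  by rewrite /= Hsz.
  rewrite Hw; apply: (subseq_trans _ (suffix_subseq _ _)) => /=.
  rewrite ?eqxx.
  apply: (subseq_trans Hsub).
  rewrite -{1}(@filter_ins (drop j.+1 m) (drop j v)) ?filter_subseq //.
  by apply/negP => /mem_drop; rewrite (negbTE H1v).
Qed.

Lemma count3 x s :
  size s = count (fun z => x < z) s + count (fun z => z < x) s + count_mem x s.
Proof.
elim: s => [|y s IH] //=; rewrite IH.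
case: (ltngtP x y) => H /=; rewrite ?eqxx; try lia.
all: try (rewrite (gtn_eqF H); lia).
all: try (rewrite (ltn_eqF H); lia).
Qed.

Lemma rev_iotaS m n : rev (iota m n.+1) = (m + n) :: rev (iota m n).
Proof. by rewrite -addn1 iotaD rev_cat. Qed.

Lemma ext_occ x c s' t q : subseq t s' -> size t = size q -> isoZ t q ->
  (forall z, z \in zip t q -> Rz (x, c) z && Rz z (x, c)) ->
  contains (x :: s') (c :: q).
Proof.
move=> Hsub Hsz Hiso H; apply/containsP; exists (x :: t); split.
- by rewrite /= eqxx.
- by rewrite /= Hsz.
- rewrite isoZ_cons Hiso andbT; apply/andP; split; apply/allP => z hz;
  by case/andP: (H z hz).
Qed.

Lemma bound r a b s : (forall y, count_mem y s <= r) ->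
  ~~ contains s (iota 1 a) -> ~~ contains s (rev (iota 1 b)) ->
  size s + r <= r * 2 ^ (a + b).
Proof.
elim: a b s => [|a IHa] b s.
  by move=> _; rewrite contains_nil.
elim: b s => [|b IHb] s.
  by move=> _ _; rewrite contains_nil.
case: s => [|x s'] Hc Hinc Hdec.
  rewrite /= add0n; have : 1 <= 2 ^ (a.+1 + b.+1) by rewrite expn_gt0.
  by nia.
set sg := filter (fun z => x < z) s'.
set sl := filter (fun z => z < x) s'.
have Hcf : forall P y, count_mem y (filter P s') <= r.
  move=> P y; apply: leq_trans (Hc y); rewrite count_filter.
  apply: (@leq_trans (count_mem y s')); first by apply: sub_count => z /andP [].
  by rewrite /= leq_addl.
have Hg : size sg + r <= r * 2 ^ (a + b.+1).
  apply: IHa; first exact: Hcf.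
  - apply: contraNN Hinc => H.
    rewrite -(@contains_mapr (addn 1)) // -iotaDl in H.
    case/containsP: H => t [Hsub Hsz Hiso].
    apply: (ext_occ (t := t)) => //.
    + exact: subseq_trans Hsub (filter_subseq _ _).
    + move=> z hz; case: (mem_zip1 hz) => h1 h2.
      move: (mem_subseq Hsub h1); rewrite mem_filter => /andP [h3 _].
      move: h2; rewrite mem_iota => /andP [h4 _].
      rewrite /Rz /= h3 h4 /=; apply/eqP; lia.
  - apply: contraNN Hdec => H.
    by apply: contains_sub H; apply: (subseq_trans (filter_subseq _ _)); apply: subseq_cons.
have Hl : size sl + r <= r * 2 ^ (a.+1 + b).
  apply: IHb; first exact: Hcf.
  - apply: contraNN Hinc => H.
    by apply: contains_sub H; apply: (subseq_trans (filter_subseq _ _)); apply: subseq_cons.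
  - apply: contraNN Hdec => H.
    case/containsP: H => t [Hsub Hsz Hiso].
    rewrite rev_iotaS add1n.
    apply: (ext_occ (t := t)) => //.
    + exact: subseq_trans Hsub (filter_subseq _ _).
    + move=> z hz; case: (mem_zip1 hz) => h1 h2.
      move: (mem_subseq Hsub h1); rewrite mem_filter => /andP [h3 _].
      move: h2; rewrite mem_rev mem_iota => /andP [_ h4].
      rewrite /Rz /= h3; apply/andP; split; apply/eqP; lia.
have Hx : count_mem x s' + 1 <= r.
  by have := Hc x; rewrite /= eqxx add1n addnC.
have Hsz : size s' = size sg + size sl + count_mem x s'.
  by rewrite (count3 x s') !size_filter.
rewrite /= Hsz.
move: Hg Hl Hx; rewrite !addnS !addSn !expnS.
set X := 2 ^ (a + b); nia.
Qed.

Lemma flat_mapS r l :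
  map S (flatten [seq nseq r i | i <- l]) = flatten [seq nseq r i | i <- map S l].
Proof. by elim: l => [|x l IH] //=; rewrite map_cat map_nseq IH. Qed.

Lemma base_S n r : base_word n.+1 r = nseq r 1 ++ map S (base_word n r).
Proof.
rewrite /base_word flat_mapS /=; congr (_ ++ flatten _).
by rewrite (iotaDl 1 1).
Qed.

Lemma count_base n r y :
  count_mem y (base_word n r) = if (1 <= y <= n) then r else 0.
Proof.
elim: n y => [|n IH] y; first by rewrite /base_word /=; case: ifP => //; lia.
rewrite base_S count_cat count_nseq count_map.
case: y => [|y].
  rewrite /= mul0n add0n.
  rewrite (@eq_count _ _ (pred0)) ?count_pred0 // => z.
case: y => [|y].
  rewrite /= mul1n.
  have -> : count (preim S (pred1 1)) (base_word n r) = count_mem 0 (base_word n r).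
    by apply: eq_count => z /=.
  by rewrite IH /= addn0.
rewrite /= mul0n add0n.
have -> : count (preim S (pred1 y.+2)) (base_word n r) = count_mem y.+1 (base_word n r).
  by apply: eq_count => z /=.
by rewrite IH.
Qed.

Lemma size_base n r : size (base_word n r) = n * r.
Proof.
elim: n => [|n IH] //; rewrite base_S size_cat size_nseq size_map IH; lia.
Qed.

Lemma words_mem n r w : (w \in words n r) = perm_eq w (base_word n r).
Proof. by rewrite /words mem_permutations. Qed.

Lemma word_props n r u : u \in words n r ->
  [/\ size u = n * r, forall y, count_mem y u <= r & all (fun x => 0 < x) u].
Proof.
rewrite words_mem => Hp; split.
- by rewrite (perm_size Hp) size_base.
- by move=> y; rewrite (permP Hp) count_base; case: ifP.
- apply/allP => x hx; move: (hx); rewrite (perm_mem Hp) -has_pred1 has_count.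
  by rewrite count_base; case: x hx => //=; rewrite ltnn.
Qed.

Fixpoint msz (L t : nat) : seq bitseq :=
  match L with
  | 0 => if t == 0 then [:: [::]] else [::]
  | L'.+1 => (if t is t'.+1 then map (cons true) (msz L' t') else [::])
             ++ map (cons false) (msz L' t)
  end.

Lemma mem_mapcons (b b' : bool) m l :
  (b :: m \in map (cons b') l) = (b == b') && (m \in l).
Proof.
elim: l => [|x l IH] /=; first by rewrite andbF.
by rewrite !in_cons eqseq_cons IH -andb_orr.
Qed.

Lemma mem_msz L t m : (m \in msz L t) = (size m == L) && (count id m == t).
Proof.
elim: L t m => [|L IH] t m /=.
  by case: t; case: m => //=.
case: m => [|b m].
  rewrite mem_cat; case: t => [|t] /=.
    by apply/negbTE/negP => /mapP [x _].
  by apply/negbTE/negP => /orP [] /mapP [x _].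
rewrite mem_cat /= eqSS.
case: t => [|t]; case: b => /=; rewrite ?mem_mapcons ?IH //=.
- by rewrite andbF.
- by rewrite orbF add1n eqSS.
Qed.

Lemma uniq_msz L t : uniq (msz L t).
Proof.
elim: L t => [|L IH] t /=; first by case: t.
rewrite cat_uniq (map_inj_uniq (f := cons false)) ?IH; last by move=> x y [].
case: t => [|t] /=.
  by rewrite andbT; apply/hasPn => x _.
rewrite (map_inj_uniq (f := cons true)) ?IH; last by move=> x y [].
rewrite andbT /=; apply/hasPn => x /mapP [y _ ->].
by rewrite mem_mapcons.
Qed.

Lemma true_in_m m : 0 < count id m -> true \in m.
Proof. by elim: m => [|b m IH] //=; case: b => //= /IH; rewrite in_cons orbC => ->. Qed.

Lemma count_negb m : count negb m = size m - count id m.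
Proof. by rewrite -(count_predC id m) addKn. Qed.

Lemma notin1_mapS u : all (fun x => 0 < x) u -> 1 \notin map S u.
Proof.
move=> Hu; apply/negP => /mapP [x hx [E]]; subst x.
by move: (allP Hu _ hx).
Qed.

Lemma words_S n r : perm_eq (words n.+1 r)
  [seq ins m (map S u) | u <- words n r, m <- msz (n * r + r) r].
Proof.
apply: uniq_perm; first exact: permutations_uniq.
  apply: allpairs_uniq; [exact: permutations_uniq | exact: uniq_msz |].
  move=> [u1 m1] [u2 m2] /allpairsP [[u1' m1'] [/= h1 h2 [E1 E2]]].
  move=> /allpairsP [[u2' m2'] [/= h3 h4 [E3 E4]]] /= E.
  subst u1' m1' u2' m2'.
  have [_ _ Hu1] := word_props h1; have [_ _ Hu2] := word_props h3.
  have [Hs1 _] := word_props h1; have [Hs2 _] := word_props h3.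
  move: h2 h4; rewrite !mem_msz => /andP [/eqP Hm1 /eqP Hc1] /andP [/eqP Hm2 /eqP Hc2].
  have Em : m1 = m2.
    rewrite -(@map_pred1_ins m1 (map S u1)) ?notin1_mapS //; last first.
      by rewrite count_negb size_map Hm1 Hc1 Hs1 addnK.
    rewrite E map_pred1_ins ?notin1_mapS //.
    by rewrite count_negb size_map Hm2 Hc2 Hs2 addnK.
  subst m2; suff -> : u1 = u2 by [].
  apply: (inj_map succn_inj).
  by rewrite -(filter_ins m1 (notin1_mapS Hu1)) E filter_ins // notin1_mapS.
move=> w; rewrite words_mem; apply/idP/allpairsP.
- move=> Hw.
  have H0 : all (fun x => 0 < x) w.
    apply/allP => x hx; move: (hx); rewrite (perm_mem Hw) -has_pred1 has_count.
    by rewrite count_base; case: x hx => //=; rewrite ltnn.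
  exists (map predn (filter (predC1 1) w), map (pred1 1) w); split => /=.
  + rewrite words_mem.
    have Hf := perm_filter (predC1 1) Hw.
    rewrite base_S filter_cat in Hf.
    have E1 : filter (predC1 1) (nseq r 1) = [::].
      by elim: (r) => //= r' ->.
    have E2 : filter (predC1 1) (map S (base_word n r)) = map S (base_word n r).
      apply/all_filterP/allP => x /mapP [y hy ->] /=.
      apply/eqP => [[E]]; subst y; move: hy; rewrite -has_pred1 has_count.
      by rewrite count_base.
    rewrite E1 E2 /= in Hf.
    have -> : base_word n r = map predn (map S (base_word n r)).
      by rewrite -map_comp map_id.
    exact: perm_map.
  + rewrite mem_msz size_map (perm_size Hw) size_base mulSn addnC eqxx /=.
    by rewrite count_map (permP Hw) count_base /=.
  + rewrite -map_comp.
    have -> : [seq (succn \o predn) x | x <- filter (predC1 1) w] = filter (predC1 1) w.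
      rewrite -[RHS]map_id; apply/eq_in_map => x; rewrite mem_filter => /andP [_ hx].
      by rewrite /= prednK // (allP H0).
    by rewrite ins_inv.
- move=> [[u m] [/= hu hm ->]].
  move: hm; rewrite mem_msz => /andP [_ /eqP Hc].
  apply: perm_trans (perm_ins _ _) _.
  rewrite Hc base_S perm_cat2l; apply: perm_map; by rewrite -words_mem.
Qed.

Lemma count_allpairs (P : pred (seq nat)) (f : seq nat -> bitseq -> seq nat) s t :
  count P [seq f u m | u <- s, m <- t] = \sum_(u <- s) count (fun m => P (f u m)) t.
Proof.
elim: s => [|u s IH]; first by rewrite big_nil.
by rewrite big_cons -IH /= count_cat count_map.
Qed.

Lemma cnt_sum (T : Type) (P : pred T) s : count P s = \sum_(x <- s) (P x : nat).
Proof. by elim: s => [|x s IH]; rewrite ?big_nil ?big_cons //= IH. Qed.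

Definition good k w := avoids w pat1234 && avoids w (pat1k k).
Definition gs k s := avoids s (behead pat1234) && avoids s (behead (pat1k k)).
Definition Bd k r := r * 2 ^ (3 + k.-1).
Definition win (B : nat) (w : seq nat) := drop (size w - B) w.
Definition rk (v : seq nat) x := (count (fun y => y < x) (undup v)).+1.
Definition std v := map (rk v) v.

Lemma cnt_lt2 x y s : x < y ->
  count (fun z => z < x) s + count (pred1 x) s <= count (fun z => z < y) s.
Proof.
move=> Hxy; elim: s => [|z s IH] //=.
have : (z < x) + (z == x) <= (z < y).
  case: (ltngtP z x) => h.
  - by rewrite (ltn_trans h Hxy).
  - by [].
  - by subst z; rewrite Hxy.
by move=> H; rewrite addnACA; apply: leq_add.
Qed.

Lemma rk_mono v : {in v &, forall x y, (rk v x < rk v y) = (x < y)}.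
Proof.
move=> x y hx hy; rewrite /rk ltnS.
case: (ltnP x y) => H.
- have := cnt_lt2 (undup v) H.
  rewrite count_uniq_mem ?undup_uniq // mem_undup hx /=; lia.
- apply/negbTE; rewrite -leqNgt; apply: sub_count => z /= h.
  exact: leq_trans h H.
Qed.

Lemma rk_bound v x : x \in v -> 0 < rk v x <= size v.
Proof.
move=> hx; rewrite /rk ltn0Sn /=.
apply: leq_trans (size_undup v).
have := count_predC (fun y => y < x) (undup v).
have : 0 < count (predC (fun y => y < x)) (undup v).
  rewrite -has_count; apply/hasP; exists x; [by rewrite mem_undup | by rewrite /= ltnn].
by move=> h1 <-; rewrite -addn1 leq_add2l.
Qed.

Lemma undup_map_in (g : nat -> nat) v : {in v &, injective g} ->
  undup (map g v) = map g (undup v).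
Proof.
elim: v => [|x v IH] Hg //=.
have Hg' : {in v &, injective g}.
  by move=> a b ha hb; apply: Hg; rewrite in_cons ?ha ?hb orbT.
have -> : (g x \in map g v) = (x \in v).
  apply/mapP/idP => [[y hy E]|hx]; last by exists x.
  by rewrite (Hg x y) ?mem_head // in_cons hy orbT.
by case: (x \in v) => /=; rewrite IH.
Qed.

Lemma std_map g v : {in v &, forall x y, (g x < g y) = (x < y)} -> std (map g v) = std v.
Proof.
move=> Hg.
have Hinj : {in v &, injective g}.
  move=> x y hx hy E; case: (ltngtP x y) => // h.
    by have := Hg x y hx hy; rewrite E ltnn h.
  by have := Hg y x hy hx; rewrite E ltnn h.
rewrite /std -map_comp; apply/eq_in_map => x hx /=.
rewrite /rk undup_map_in // count_map; congr (_.+1).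
apply: eq_in_count => z; rewrite mem_undup => hz /=.
by apply: Hg.
Qed.

Lemma win_map B g w : win B (map g w) = map g (win B w).
Proof. by rewrite /win size_map map_drop. Qed.

Lemma size_win B w : B <= size w -> size (win B w) = B.
Proof. move=> H; rewrite /win size_drop; lia. Qed.

Lemma win_cat B X Y : B <= size Y -> win B (X ++ Y) = win B Y.
Proof.
move=> H; rewrite /win drop_cat size_cat.
case: ifP => h; first lia.
congr drop; lia.
Qed.

Lemma mono_S : {in predT &, forall x y : nat, (x.+1 < y.+1) = (x < y)}.
Proof. by move=> x y _ _; rewrite ltnS. Qed.

Lemma gs_bound k r s : 3 <= k -> gs k s -> (forall y, count_mem y s <= r) ->
  size s <= Bd k r.
Proof.
move=> hk /andP [H1 H2] Hc.
have := @bound r 3 k.-1 s Hc.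
have E1 : behead pat1234 = map (addn 1) (iota 1 3) by [].
have E2 : behead (pat1k k) = map (addn 1) (rev (iota 1 k.-1)).
  by rewrite /pat1k /= map_rev -iotaDl.
rewrite /avoids E1 E2 !contains_mapr in H1 H2; try by move=> x y _ _; rewrite ltn_add2l.
move/(_ H1 H2); rewrite /Bd => H; apply: leq_trans H; apply: leq_addr.
Qed.

Lemma good_ins k u m : all (fun x => 0 < x) u -> true \in m ->
  good k (ins m (map S u)) = good k u && gs k (drop (index true m) u).
Proof.
move=> Hu Hm.
have HS : all (fun x => 1 < x) (map S u).
  by apply/allP => x /mapP [y hy ->]; rewrite ltnS (allP Hu).
have HmS : forall p, contains (map S u) p = contains u p.
  by move=> p; apply: contains_mapl => x y _ _; rewrite ltnS.
have HmS' : forall p, contains (drop (index true m) (map S u)) p =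
                      contains (drop (index true m) u) p.
  by move=> p; rewrite -map_drop; apply: contains_mapl => x y _ _; rewrite ltnS.
rewrite /good /gs /avoids.
have -> : pat1234 = 1 :: behead pat1234 by [].
have -> : pat1k k = 1 :: behead (pat1k k) by [].
rewrite !decomp //; last first.
  by apply/allP => x; rewrite /pat1k /= mem_rev mem_iota => /andP [].
rewrite !HmS !HmS' /=.
by case: (contains u _); case: (contains u _); case: (contains _ _); case: (contains _ _).
Qed.

Lemma peel (P : pred bitseq) c n t :
  (forall i m, i < c -> P (nseq i false ++ true :: m) = false) ->
  count P (msz (c + n) t) = count (fun m => P (nseq c false ++ m)) (msz n t).
Proof.
elim: c P => [|c IH] P H; first by apply: eq_count.
rewrite addSn /= count_cat.
have -> : count P (if t is t'.+1 then map (cons true) (msz (c + n) t') else [::]) = 0.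
  case: (t) => [|t'] //; rewrite count_map.
  rewrite (@eq_count _ _ pred0) ?count_pred0 // => m /=.
  exact: (H 0 m).
rewrite add0n count_map (IH (fun m => P (false :: m))) //.
by move=> i m hi; apply: (H i.+1).
Qed.

Definition Tm k r (s t : seq nat) :=
  count (fun m => gs k (drop (index true m) s) &&
                  (std (win (Bd k r) (ins m (map S s))) == t)) (msz (Bd k r + r) r).

Lemma count_drop_le (y i : nat) u : count_mem y (drop i u) <= count_mem y u.
Proof. by rewrite -{2}(cat_take_drop i u) count_cat leq_addl. Qed.

Lemma per_u k r n u t : 3 <= k -> 0 < r -> u \in words n r -> Bd k r <= n * r ->
  count (fun m => good k (ins m (map S u)) && (std (win (Bd k r) (ins m (map S u))) == t))
        (msz (n * r + r) r) = good k u * Tm k r (std (win (Bd k r) u)) t.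
Proof.
move=> hk hr Hu HB.
have [Hsz Hcnt Hpos] := word_props Hu.
set B := Bd k r in HB *.
set c := n * r - B.
set wu := win B u.
have Hwu : wu = drop c u by rewrite /wu /win Hsz.
have Htrue : forall m, m \in msz (n * r + r) r -> true \in m.
  by move=> m; rewrite mem_msz => /andP [_ /eqP Hc]; apply: true_in_m; rewrite Hc.
case Hg: (good k u); last first.
  rewrite mul0n (@eq_in_count _ _ pred0) ?count_pred0 // => m hm.
  by rewrite good_ins ?Hg ?Htrue.
rewrite mul1n.
rewrite (@eq_in_count _ _ (fun m => gs k (drop (index true m) u) &&
           (std (win B (ins m (map S u))) == t))); last first.
  by move=> m hm; rewrite good_ins ?Hg ?Htrue.
have -> : n * r + r = c + (B + r) by rewrite /c; lia.
rewrite peel; last first.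
  move=> i m hi /=.
  have -> : index true (nseq i false ++ true :: m) = i.
    by rewrite index_cat mem_nseq andbF size_nseq /= addn0.
  apply/negbTE/negP => /andP [Hgs _].
  have := gs_bound hk Hgs (fun y => leq_trans (count_drop_le y i u) (Hcnt y)).
  rewrite size_drop Hsz -/B; rewrite /c in hi; lia.
apply: eq_in_count => m hm /=.
rewrite index_cat mem_nseq andbF size_nseq addnC -drop_drop -Hwu.
have -> : drop (index true m) (std wu) = map (rk wu) (drop (index true m) wu).
  by rewrite /std map_drop.
rewrite -/B.
congr (_ && _).
  rewrite /gs /avoids !contains_mapl //.
  - by move=> x y hx hy; apply: rk_mono; apply: (mem_drop (n0 := index true m)).
  - by move=> x y hx hy; apply: rk_mono; apply: (mem_drop (n0 := index true m)).
rewrite ins_nseq -map_take -map_drop -Hwu.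
have Hm : count id m = r by move: hm; rewrite mem_msz => /andP [_ /eqP].
have HszY : B <= size (ins m (map S wu)).
  by rewrite (perm_size (perm_ins _ _)) size_cat size_map size_nseq Hm size_win ?leq_addl // Hsz HB.
rewrite win_cat //.
pose g := fun y => if y == 1 then 1 else (rk wu y.-1).+1.
have Hwpos : forall x, x \in wu -> 0 < x.
  by move=> x hx; apply: (allP Hpos); rewrite Hwu in hx; apply: mem_drop hx.
have -> : map S (std wu) = map g (map S wu).
  rewrite /std -!map_comp; apply/eq_in_map => x hx /=.
  by rewrite /g /=; case: x hx => [|x] hx //; have := Hwpos _ hx.
rewrite -(@map_ins g) // win_map.
set Y := ins m (map S wu).
have HY : forall y, y \in Y -> y = 1 \/ exists2 x, x \in wu & y = x.+1.
  move=> y /mem_ins [->|/mapP [x hx ->]]; [by left | by right; exists x].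
have Hmono : {in win B Y &, forall x y, (g x < g y) = (x < y)}.
  move=> y1 y2 h1 h2.
  have rkp : forall x, x \in wu -> 0 < rk wu x by move=> x hx; case/andP: (rk_bound hx).
  have gS : forall x, x \in wu -> g x.+1 = (rk wu x).+1.
    by move=> x hx; rewrite /g /=; case: x hx => [|x] hx //; have := Hwpos _ hx.
  case: (HY y1 (mem_drop h1)) => [->|[x1 hx1 ->]];
  case: (HY y2 (mem_drop h2)) => [->|[x2 hx2 ->]].
  - by [].
  - have g1 : g 1 = 1 by [].
    rewrite g1 (gS x2) //; have := rkp x2 hx2; have := Hwpos x2 hx2.
    by move=> a b; apply/idP/idP => _; lia.
  - have g1 : g 1 = 1 by [].
    by rewrite g1 (gS x1) //; apply/idP/idP => _; lia.
  - have E : forall a b, (a.+1 < b.+1) = (a < b) by [].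
    by rewrite (gS x1) // (gS x2) // (E (rk wu x1) (rk wu x2)) (E x1 x2) rk_mono.
by rewrite /std -/(std (map g (win B Y))) std_map.
Qed.

Fixpoint sq (B L : nat) : seq (seq nat) :=
  if L is L'.+1 then [seq x :: s | x <- iota 0 B.+1, s <- sq B L'] else [:: [::]].

Lemma sq_mem B s : all (fun x => x <= B) s -> s \in sq B (size s).
Proof.
elim: s => [|x s IH] // /andP [hx hs].
change (x :: s \in [seq y :: z | y <- iota 0 B.+1, z <- sq B (size s)]).
apply/allpairsP; exists (x, s); split; [ | exact: IH | by []].
by change (x \in iota 0 B.+1); rewrite mem_iota add0n ltnS.
Qed.

Lemma count_split (P : pred (seq nat)) (h : seq nat -> seq nat) s S :
  uniq S -> (forall w, w \in s -> P w -> h w \in S) ->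
  count P s = \sum_(x <- S) count (fun w => P w && (h w == x)) s.
Proof.
move=> HS; elim: s => [|w s IH] H /=.
  by rewrite big1.
rewrite big_split /= -IH; last by move=> v hv; apply: H; rewrite in_cons hv orbT.
congr (_ + _).
case Pw: (P w) => /=.
- rewrite (bigD1_seq (h w)) //= ?eqxx; last by apply: H; rewrite ?mem_head.
  rewrite big1 // => x /negbTE; rewrite eq_sym => ->.
  by [].
- by rewrite big1.
Qed.

Theorem mainTheorem4 (k r : nat) (hk : (3 <= k)%N) (hr : (1 <= r)%N) :
  linear_recurrent (d k r).
Proof.
pose B := Bd k r.
pose Sx := undup (sq B B).
pose F n s := count (fun w => good k w && (std (win B w) == s)) (words n r).
have HB : forall n, B <= n -> B <= n * r.
  move=> n Hn; apply: leq_trans Hn _; rewrite leq_pmulr //.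
have Hst : forall n w, B <= n -> w \in words n r -> std (win B w) \in Sx.
  move=> n w Hn Hw; have [Hsz _ _] := word_props Hw.
  have Hsw : size (win B w) = B by rewrite size_win // Hsz HB.
  rewrite mem_undup.
  have := @sq_mem B (std (win B w)); rewrite size_map Hsw; apply.
  apply/allP => x /mapP [y hy ->].
  by case/andP: (rk_bound hy); rewrite Hsw.
apply: (@linrec_abs Sx F (Tm k r) _ B).
- move=> n Hn.
  change (count (good k) (words n r) = \sum_(s <- Sx) F n s).
  apply: count_split; first exact: undup_uniq.
  by move=> w hw _; apply: (Hst n).
- move=> n Hn t Ht.
  rewrite /F (permP (words_S n r)) count_allpairs.
  rewrite big_seq.
  under eq_bigr => u hu do rewrite (per_u _ hk hr hu (HB n Hn)).
  rewrite -big_seq.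
  under [RHS]eq_bigr => s _ do rewrite cnt_sum big_distrl /=.
  rewrite exchange_big /= big_seq [RHS]big_seq.
  apply: eq_bigr => u hu.
  rewrite (bigD1_seq (std (win B u))) ?undup_uniq ?(Hst n) //= eqxx andbT.
  rewrite big1 ?addn0 // => x /negbTE; rewrite eq_sym => ->.
  by rewrite andbF.
Qed.
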